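(* Let $V=\{1,\#_p,\#_c,0\}$ and consider the truth-relation $\models_{\{1,\#_p\},\{1,\#_c\}}$. For every $n$ and every pair $(\mathcal{B}^p,\mathcal{B}^c)$ of premise/conclusion regularity rules for an $n$-ary connective, there is a unique truth function $f:V^n\to V$ satisfying this regularity rule at the level of truth values, i.e. such that for all $\gamma,\delta\subseteq V$ and $x_1,\dots,x_n\in V$: $\gamma\cup\{f(\vec x)\}\models\delta$ iff for all $(B_p,B_c)\in\mathcal{B}^p$, $\gamma\cup\{x_i:i\in B_p\}\models\{x_i:i\in B_c\}\cup\delta$; and $\gamma\models\{f(\vec x)\}\cup\delta$ iff for all $(B_p,B_c)\in\mathcal{B}^c$, $\gamma\cup\{x_i:i\in B_p\}\models\{x_i:i\in B_c\}\cup\delta$.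
   Context: Here $\models_{\mathcal{D}_p,\mathcal{D}_c}$ denotes the relation on $\mathcal{P}(V)\times\mathcal{P}(V)$: $\gamma\models_{\mathcal{D}_p,\mathcal{D}_c}\delta$ iff ($\gamma\subseteq\mathcal{D}_p\Rightarrow\delta\cap\mathcal{D}_c\neq\emptyset$). A regularity rule for an $n$-ary connective is a pair $\mathcal{B}^p,\mathcal{B}^c\subseteq\mathcal{P}(\{1,\dots,n\})\times\mathcal{P}(\{1,\dots,n\})$. Empty conjunctions count as true. *)

(* Defs.v *)
From HB Require Import structures.
From mathcomp Require Import all_boot.
Set Implicit Arguments. Unset Strict Implicit. Unset Printing Implicit Defensive.

Inductive tv := T1 | Tp | Tc | T0.

Definition tv_code (x : tv) : 'I_4 :=
  match x with T1 => inord 0 | Tp => inord 1 | Tc => inord 2 | T0 => inord 3 end.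
Definition tv_decode (i : 'I_4) : tv :=
  match val i with 0 => T1 | 1 => Tp | 2 => Tc | _ => T0 end.
Lemma tv_codeK : cancel tv_code tv_decode.
Proof. by case; rewrite /tv_decode /= inordK. Qed.
HB.instance Definition _ := Equality.copy tv (can_type tv_codeK).
HB.instance Definition _ := Finite.copy tv (can_type tv_codeK).

Definition Dp : {set tv} := [set T1; Tp].
Definition Dc : {set tv} := [set T1; Tc].

Definition models (gamma delta : {set tv}) : Prop :=
  gamma \subset Dp -> delta :&: Dc != set0.

Definition rule (n : nat) := {set {set 'I_n} * {set 'I_n}}.

Definition vals n (x : {ffun 'I_n -> tv}) (B : {set 'I_n}) : {set tv} := x @: B.

Definition satisfies_rules n (Bp Bc : rule n) (f : {ffun {ffun 'I_n -> tv} -> tv}) : Prop :=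
  forall (gamma delta : {set tv}) (x : {ffun 'I_n -> tv}),
    (models (f x |: gamma) delta <->
       (forall B, B \in Bp -> models (gamma :|: vals x B.1) (vals x B.2 :|: delta)))
    /\
    (models gamma (f x |: delta) <->
       (forall B, B \in Bc -> models (gamma :|: vals x B.1) (vals x B.2 :|: delta))).

(* Main.v *)
Require Import Defs.
From mathcomp Require Import all_boot.

Definition allS n (R : rule n) (x : {ffun 'I_n -> tv}) : bool :=
  [forall B in R, (vals x B.1 \subset Dp) ==> (vals x B.2 :&: Dc != set0)].
Arguments allS {n}.

Lemma L1 n (R : rule n) gamma delta x :
  (forall B, B \in R -> models (gamma :|: vals x B.1) (vals x B.2 :|: delta)) <->
  (gamma \subset Dp -> delta :&: Dc != set0 \/ allS R x).
Proof.
rewrite /models; split.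
- move=> H g; case: (boolP (delta :&: Dc == set0)) => [/eqP d0|d0]; last by left.
  right; apply/forall_inP => B BR; apply/implyP => s1.
  have := H B BR; rewrite subUset g s1 setIUl d0 setU0; exact.
- move=> H B BR; rewrite subUset => /andP [g s1].
  case: (H g) => [d|/forall_inP/(_ B BR)/implyP/(_ s1)].
  + rewrite setIUl; apply: contra d; rewrite setU_eq0 => /andP [_ ->] //.
  + rewrite setIUl; apply: contra; rewrite setU_eq0 => /andP [-> _] //.
Qed.

Lemma L2 v gamma delta :
  models (v |: gamma) delta <-> (gamma \subset Dp -> delta :&: Dc != set0 \/ v \notin Dp).
Proof.
rewrite /models subUset sub1set; split.
- move=> H g; case: (boolP (v \in Dp)) => vD; last by right.
  by left; apply: H; rewrite vD g.
- move=> H /andP [vD g]; case: (H g) => //; by rewrite vD.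
Qed.

Lemma L3 v gamma delta :
  models gamma (v |: delta) <-> (gamma \subset Dp -> delta :&: Dc != set0 \/ v \in Dc).
Proof.
rewrite /models setIUl; split.
- move=> H g; case: (boolP (v \in Dc)) => vD; first by right.
  left; have := H g; apply: contra => /eqP d0; rewrite d0 setU0.
  apply/eqP/setP => y; rewrite !inE; apply/negbTE; apply/andP => [[/eqP Ey]]; subst y; by move: vD; rewrite !inE => /negbTE ->.
- move=> H g; case: (H g) => [|vD]; first by apply: contra; rewrite setU_eq0 => /andP [_ ->].
  apply/set0Pn; exists v; by rewrite in_setU !in_setI in_set1 eqxx vD.
Qed.

Definition tv_beq (x y : tv) : bool :=
  match x, y with T1, T1 | Tp, Tp | Tc, Tc | T0, T0 => true | _, _ => false end.
Lemma tv_eqE (x y : tv) : (x == y) = tv_beq x y.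
Proof. by apply/eqP/idP; case: x; case: y. Qed.

Definition g n (Bp Bc : rule n) (x : {ffun 'I_n -> tv}) : tv :=
  match allS Bp x, allS Bc x with
  | false, true => T1 | false, false => Tp | true, true => Tc | true, false => T0 end.
Arguments g {n}.


Lemma gP1 n (Bp Bc : rule n) x : (g Bp Bc x \notin Dp) = allS Bp x.
Proof. by rewrite /g /Dp /Dc; case: (allS Bp x); case: (allS Bc x); rewrite !inE !tv_eqE. Qed.
Lemma gP2 n (Bp Bc : rule n) x : (g Bp Bc x \in Dc) = allS Bc x.
Proof. by rewrite /g /Dp /Dc; case: (allS Bp x); case: (allS Bc x); rewrite !inE !tv_eqE. Qed.

Lemma tv_det v w : (v \notin Dp) = (w \notin Dp) -> (v \in Dc) = (w \in Dc) -> v = w.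
Proof. by case: v; case: w; rewrite /Dp /Dc !inE !tv_eqE. Qed.

Theorem theorem3p22 : forall (n : nat) (Bp Bc : rule n),
  exists! f : {ffun {ffun 'I_n -> tv} -> tv}, satisfies_rules Bp Bc f.
Proof.
move=> n Bp Bc; exists [ffun x => g Bp Bc x]; split.
- move=> gamma delta x; rewrite ffunE; split.
  + eapply iff_trans; first exact: L2. eapply iff_trans; last (apply: iff_sym; exact: L1).
    by rewrite gP1.
  + eapply iff_trans; first exact: L3. eapply iff_trans; last (apply: iff_sym; exact: L1).
    by rewrite gP2.
- move=> f Hf; apply/ffunP => x; rewrite ffunE.
  have [H1 H2] := Hf set0 set0 x.
  have e1 : (f x \notin Dp) = allS Bp x.
    have := L2 (f x) set0 set0; have := @L1 _ Bp set0 set0 x.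
    rewrite sub0set set0I eqxx /= => A B.
    apply/idP/idP => h.
    + by case: (A.1 (H1.1 (B.2 (fun _ => or_intror h))) isT).
    + by case: (B.1 (H1.2 (A.2 (fun _ => or_intror h))) isT).
  have e2 : (f x \in Dc) = allS Bc x.
    have := L3 (f x) set0 set0; have := @L1 _ Bc set0 set0 x.
    rewrite sub0set set0I eqxx /= => A B.
    apply/idP/idP => h.
    + by case: (A.1 (H2.1 (B.2 (fun _ => or_intror h))) isT).
    + by case: (B.1 (H2.2 (A.2 (fun _ => or_intror h))) isT).
  apply: tv_det; by rewrite ?gP1 ?gP2.
Qed.
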